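(* Let $(\mathcal{C},P)$ be a doctrine with comprehension such that for every $\alpha$ the functor $\lfloor\alpha\rfloor^*$ has a right adjoint $\Pi_{\lfloor\alpha\rfloor}$. If the operation $\alpha\rightarrow\beta:=\Pi_{\lfloor\alpha\rfloor}\lfloor\alpha\rfloor^*\beta$ makes $(\mathcal{C},P)$ implicational (in particular, if it satisfies condition (iv)(c) below), then the comprehension is full. Consequently, for a $\Pi$-doctrine with comprehension which is a restricted $\Pi(\mathcal{C}_P)$-doctrine, this operation provides an implicational structure if and only if comprehension is full.
   Context: A doctrine is a pair $(\mathcal{C},P)$, $\mathcal{C}$ a category with finite products, $P:\mathcal{C}^{op}\to\mathbf{Pos}$ a functor, $f^*=P(f)$. A right adjoint $\Pi_u$ of $u^*$ satisfies $u^*\Pi_u\alpha\le\alpha$, $\beta\le\Pi_uu^*\beta$. Comprehension: every $P(A)$ has a top $\top_A$ and for each $\alpha\in P(A)$ there is $\lfloor\alpha\rfloor:\{\alpha\}\to A$ with $\lfloor\alpha\rfloor^*\alpha=\top_{\{\alpha\}}$ such that every $f:Y\to A$ with $f^*\alpha=\top_Y$ factors uniquely through $\lfloor\alpha\rfloor$; it is full if whenever $\lfloor\alpha\rfloor$ factors through $\lfloor\beta\rfloor$ then $\alpha\le\beta$. $\mathcal{C}_P$ is the class of arrows $\lfloor\alpha\rfloor$. Beck–Chevalley for right adjoints with respect to a pullback-stable class $\mathcal{A}$: for every pullback square $h\circ g=f\circ k$ with $f\in\mathcal{A}$, $h^*\Pi_f\gamma=\Pi_gk^*\gamma$; restricted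 version: only for $\gamma=f^*\xi$. A $\Pi$-doctrine: right adjoints along all product projections satisfying Beck–Chevalley with respect to product projections. Implicational: there is $\rightarrow$ on each $P(A)$ with (ii) $f^*(\alpha\rightarrow\beta)=f^*\alpha\rightarrow f^*\beta$; (iii) $\Pi_{\pi_A}(\pi_A^*\alpha\rightarrow\beta)=\alpha\rightarrow\Pi_{\pi_A}\beta$ for projections $\pi_A:X\times A\to A$; (iv) (a) $\phi\le\psi\rightarrow\phi$; (b) $\gamma\rightarrow(\phi\rightarrow\psi)\le(\gamma\rightarrow\phi)\rightarrow(\gamma\rightarrow\psi)$; (c) if $\gamma\le\phi\rightarrow\psi$ and $\gamma\le\phi$ then $\gamma\le\psi$; (d) if $\phi\le\psi$ then $\gamma\le\phi\rightarrow\psi$. *)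

(* Defs.v *)
Set Implicit Arguments.
Unset Strict Implicit.

Record CartCat := {
  Obj : Type;
  Hom : Obj -> Obj -> Type;
  idm : forall A, Hom A A;
  comp : forall A B C, Hom B C -> Hom A B -> Hom A C;   (* comp g f = g o f *)
  comp_idl : forall A B (f : Hom A B), comp (idm B) f = f;
  comp_idr : forall A B (f : Hom A B), comp f (idm A) = f;
  comp_assoc : forall A B C D (h : Hom C D) (g : Hom B C) (f : Hom A B),
      comp h (comp g f) = comp (comp h g) f;
  one : Obj;
  bang : forall A, Hom A one;
  bang_uniq : forall A (f : Hom A one), f = bang A;
  prod : Obj -> Obj -> Obj;
  p1 : forall A B, Hom (prod A B) A;
  p2 : forall A B, Hom (prod A B) B;
  pair : forall X A B, Hom X A -> Hom X B -> Hom X (prod A B);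
  p1_pair : forall X A B (f : Hom X A) (g : Hom X B), comp (p1 A B) (pair f g) = f;
  p2_pair : forall X A B (f : Hom X A) (g : Hom X B), comp (p2 A B) (pair f g) = g;
  pair_uniq : forall X A B (h : Hom X (prod A B)),
      h = pair (comp (p1 A B) h) (comp (p2 A B) h)
}.
Arguments idm {c} A.
Arguments comp {c A B C} _ _.
Arguments p1 {c} A B.
Arguments p2 {c} A B.
Arguments pair {c X A B} _ _.

Definition is_iso (C : CartCat) (A B : Obj C) (i : Hom A B) : Prop :=
  exists j : Hom B A, comp j i = idm A /\ comp i j = idm B.

(* pullback square  h o g = f o k :
       D --k--> B
       |g       |f
       C --h--> A                                            *)
Definition is_pullback (C : CartCat) (A B Cc D : Obj C)
  (f : Hom B A) (h : Hom Cc A) (g : Hom D Cc) (k : Hom D B) : Prop :=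
  comp h g = comp f k /\
  forall E (x : Hom E Cc) (y : Hom E B), comp h x = comp f y ->
    exists! z : Hom E D, comp g z = x /\ comp k z = y.

(* product projections pi_A : X x A -> A (up to isomorphism of the domain,
   so that the class is pullback-stable) *)
Definition isProj (C : CartCat) (B A : Obj C) (u : Hom B A) : Prop :=
  exists X (i : Hom B (prod X A)), is_iso i /\ comp (p2 X A) i = u.

Record Doctrine (C : CartCat) := {
  Pr : Obj C -> Type;
  le : forall A, Pr A -> Pr A -> Prop;
  le_refl : forall A (a : Pr A), le a a;
  le_trans : forall A (a b c : Pr A), le a b -> le b c -> le a c;
  le_antisym : forall A (a b : Pr A), le a b -> le b a -> a = b;
  rx : forall A B, Hom B A -> Pr A -> Pr B;
  rx_mono : forall A B (f : Hom B A) a b, le a b -> le (rx f a) (rx f b);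
  rx_id : forall A (a : Pr A), rx (idm A) a = a;
  rx_comp : forall A B Cc (f : Hom A B) (g : Hom B Cc) (a : Pr Cc),
      rx (comp g f) a = rx f (rx g a)
}.
Arguments Pr {C} d _.
Arguments le {C d A} _ _.
Arguments rx {C d A B} _ _.

Record Comprehension (C : CartCat) (P : Doctrine C) := {
  top : forall A, Pr P A;
  top_max : forall A (a : Pr P A), le a (top A);
  top_stable : forall A B (f : Hom B A), rx f (top A) = top B;
  cObj : forall A, Pr P A -> Obj C;
  cmp : forall A (a : Pr P A), Hom (cObj a) A;
  cmp_top : forall A (a : Pr P A), rx (cmp a) a = top (cObj a);
  cmp_univ : forall A (a : Pr P A) Y (f : Hom Y A), rx f a = top Y ->
      exists! g : Hom Y (cObj a), f = comp (cmp a) g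
}.
Arguments top {C P} c A.
Arguments cObj {C P} c {A} _.
Arguments cmp {C P} c {A} _.

Definition full_comprehension (C : CartCat) (P : Doctrine C) (K : Comprehension P) : Prop :=
  forall A (a b : Pr P A) (g : Hom (cObj K a) (cObj K b)),
    cmp K a = comp (cmp K b) g -> le a b.

Definition isCP (C : CartCat) (P : Doctrine C) (K : Comprehension P)
  (B A : Obj C) (u : Hom B A) : Prop :=
  exists (a : Pr P A) (i : Hom B (cObj K a)), is_iso i /\ comp (cmp K a) i = u.

(* Pi is a (total) assignment of a candidate right adjoint to every arrow;
   the relevant hypotheses require it to be a right adjoint on a class. *)
Definition PiOp (C : CartCat) (P : Doctrine C) :=
  forall A B, Hom B A -> Pr P B -> Pr P A.

Definition is_right_adj (C : CartCat) (P : Doctrine C) (A B : Obj C)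
  (u : Hom B A) (R : Pr P B -> Pr P A) : Prop :=
  (forall a b, le a b -> le (R a) (R b)) /\
  (forall a, le (rx u (R a)) a) /\
  (forall b, le b (R (rx u b))).

Definition BC (C : CartCat) (P : Doctrine C) (Pi : PiOp P)
  (Acl : forall B A, Hom B A -> Prop) : Prop :=
  forall A B Cc D (f : Hom B A) (h : Hom Cc A) (g : Hom D Cc) (k : Hom D B),
    Acl B A f -> is_pullback f h g k ->
    forall gam : Pr P B, rx h (Pi _ _ f gam) = Pi _ _ g (rx k gam).

Definition BC_restricted (C : CartCat) (P : Doctrine C) (Pi : PiOp P)
  (Acl : forall B A, Hom B A -> Prop) : Prop :=
  forall A B Cc D (f : Hom B A) (h : Hom Cc A) (g : Hom D Cc) (k : Hom D B),
    Acl B A f -> is_pullback f h g k ->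
    forall xi : Pr P A, rx h (Pi _ _ f (rx f xi)) = Pi _ _ g (rx k (rx f xi)).

Definition Pi_doctrine (C : CartCat) (P : Doctrine C) (Pi : PiOp P) : Prop :=
  (forall B A (u : Hom B A), isProj u -> is_right_adj u (Pi _ _ u)) /\
  BC Pi (@isProj C).

Definition restricted_Pi_CP_doctrine (C : CartCat) (P : Doctrine C)
  (K : Comprehension P) (Pi : PiOp P) : Prop :=
  (forall B A (u : Hom B A), isCP K u -> is_right_adj u (Pi _ _ u)) /\
  BC_restricted Pi (@isCP C P K).

Definition ImpOp (C : CartCat) (P : Doctrine C) := forall A, Pr P A -> Pr P A -> Pr P A.

Definition imp_cond_c (C : CartCat) (P : Doctrine C) (imp : ImpOp P) : Prop :=
  forall A (g f s : Pr P A), le g (imp A f s) -> le g f -> le g s.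

Definition implicational (C : CartCat) (P : Doctrine C) (Pi : PiOp P) (imp : ImpOp P) : Prop :=
  (forall A B (f : Hom B A) (a b : Pr P A), rx f (imp A a b) = imp B (rx f a) (rx f b)) /\
  (forall X A (a : Pr P A) (b : Pr P (prod X A)),
      Pi _ _ (p2 X A) (imp _ (rx (p2 X A) a) b) = imp A a (Pi _ _ (p2 X A) b)) /\
  (forall A (f s : Pr P A), le f (imp A s f)) /\
  (forall A (g f s : Pr P A),
      le (imp A g (imp A f s)) (imp A (imp A g f) (imp A g s))) /\
  imp_cond_c imp /\
  (forall A (g f s : Pr P A), le f s -> le g (imp A f s)).

Definition comp_imp (C : CartCat) (P : Doctrine C) (K : Comprehension P) (Pi : PiOp P)
  : ImpOp P :=
  fun A a b => Pi _ _ (cmp K a) (rx (cmp K a) b).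

(* Main.v *)
Require Import Defs.
Set Implicit Arguments.
Unset Strict Implicit.

Lemma adj_iff (C : CartCat) (P : Doctrine C) A B (u : Hom B A) (R : Pr P B -> Pr P A) :
  is_right_adj u R -> forall g d, le g (R d) <-> le (rx u g) d.
Proof.
  intros [Hm [Hc Hu]] g d; split; intro H.
  - eapply le_trans; [apply rx_mono; exact H| apply Hc].
  - eapply le_trans; [apply Hu| apply Hm; exact H].
Qed.

Lemma top_eq (C : CartCat) (P : Doctrine C) (K : Comprehension P) A (x : Pr P A) :
  le (top K A) x -> x = top K A.
Proof. intro H; apply le_antisym; [apply top_max| exact H]. Qed.

Lemma cmp_fact (C : CartCat) (P : Doctrine C) (K : Comprehension P) A (a b : Pr P A) :
  le a b -> exists g, cmp K a = comp (cmp K b) g.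
Proof.
  intro H.
  assert (E : rx (cmp K a) b = top K _).
  { apply top_eq. rewrite <- (cmp_top K a). apply rx_mono; exact H. }
  destruct (cmp_univ E) as [g [Hg _]]. exists g; exact Hg.
Qed.

Lemma cmp_mono (C : CartCat) (P : Doctrine C) (K : Comprehension P) A (a : Pr P A)
  E (y1 y2 : Hom E (cObj K a)) : comp (cmp K a) y1 = comp (cmp K a) y2 -> y1 = y2.
Proof.
  intro H.
  assert (T : rx (comp (cmp K a) y1) a = top K E).
  { rewrite rx_comp, cmp_top, top_stable; reflexivity. }
  destruct (cmp_univ T) as [g [Hg Hu]].
  transitivity g; [symmetry; apply Hu; reflexivity | apply Hu; exact H].
Qed.

Lemma isCP_cmp (C : CartCat) (P : Doctrine C) (K : Comprehension P) A (a : Pr P A) :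
  isCP K (cmp K a).
Proof.
  exists a, (idm _). split; [exists (idm _); split; apply comp_idl | apply comp_idr].
Qed.

Lemma isProj_p2 (C : CartCat) X A : @isProj C _ _ (p2 X A).
Proof.
  exists X, (idm _). split; [exists (idm _); split; apply comp_idl | apply comp_idr].
Qed.

Lemma pb_cmp (C : CartCat) (P : Doctrine C) (K : Comprehension P) A B
  (f : Hom B A) (a : Pr P A) :
  exists k : Hom (cObj K (rx f a)) (cObj K a),
    comp (cmp K a) k = comp f (cmp K (rx f a)) /\
    is_pullback (cmp K a) f (cmp K (rx f a)) k.
Proof.
  assert (T : rx (comp f (cmp K (rx f a))) a = top K _).
  { rewrite rx_comp, cmp_top; reflexivity. }
  destruct (cmp_univ T) as [k [Hk _]].
  exists k. split; [symmetry; exact Hk|]. split; [exact Hk|].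
  intros E x y Hxy.
  assert (T2 : rx x (rx f a) = top K E).
  { rewrite <- rx_comp, Hxy, rx_comp, cmp_top, top_stable; reflexivity. }
  destruct (cmp_univ T2) as [z [Hz Hu]].
  exists z. split.
  - split; [symmetry; exact Hz|].
    apply (@cmp_mono _ _ K). rewrite comp_assoc, <- Hk, <- comp_assoc, <- Hz. exact Hxy.
  - intros z' [H1 _]. apply Hu. symmetry; exact H1.
Qed.

Lemma pair_comp (C : CartCat) X A B E (a : Hom X A) (b : Hom X B) (c : Hom E X) :
  comp (c:=C) (pair a b) c = pair (comp a c) (comp b c).
Proof.
  rewrite (pair_uniq (comp (pair a b) c)).
  rewrite !comp_assoc, p1_pair, p2_pair. reflexivity.
Qed.

Lemma pb_proj (C : CartCat) X A Cc (h : Hom Cc A) :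
  is_pullback (C:=C) (p2 X A) h (p2 X Cc) (pair (p1 X Cc) (comp h (p2 X Cc))).
Proof.
  split; [rewrite p2_pair; reflexivity|].
  intros E x y Hxy.
  exists (pair (comp (p1 X A) y) x). split.
  - split; [apply p2_pair|].
    rewrite pair_comp, <- comp_assoc, !p1_pair, p2_pair, Hxy.
    symmetry; apply pair_uniq.
  - intros z [H1 H2]. subst x. subst y.
    symmetry.
    rewrite comp_assoc, p1_pair. apply pair_uniq.
Qed.


Lemma imp_ii (C : CartCat) (P : Doctrine C) (K : Comprehension P) (Pi : PiOp P)
  (HBC : BC_restricted Pi (@isCP C P K)) A B (f : Hom B A) (a b : Pr P A) :
  rx f (@comp_imp _ _ K Pi A a b) = @comp_imp _ _ K Pi B (rx f a) (rx f b).
Proof.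
  destruct (pb_cmp K f a) as [k [Hk Hpb]]. unfold comp_imp.
  rewrite (HBC _ _ _ _ _ _ _ _ (isCP_cmp K a) Hpb b).
  rewrite <- (rx_comp k (cmp K a)), Hk, rx_comp. reflexivity.
Qed.

Lemma imp_c (C : CartCat) (P : Doctrine C) (K : Comprehension P) (Pi : PiOp P)
  (Hadj : forall A (a : Pr P A), is_right_adj (cmp K a) (Pi _ _ (cmp K a)))
  (Hfull : full_comprehension K) : imp_cond_c (comp_imp K Pi).
Proof.
  intros A g f s H1 H2.
  destruct (cmp_fact K H2) as [h Hh].
  apply (proj1 (adj_iff (Hadj A f) _ _)) in H1.
  apply (rx_mono h) in H1. rewrite <- !rx_comp, <- Hh, cmp_top in H1.
  apply top_eq in H1.
  destruct (cmp_univ H1) as [z [Hz _]].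
  exact (Hfull _ _ _ z Hz).
Qed.


Lemma imp_mono2 (C : CartCat) (P : Doctrine C) (K : Comprehension P) (Pi : PiOp P)
  (Hadj : forall A (a : Pr P A), is_right_adj (cmp K a) (Pi _ _ (cmp K a)))
  A (a b b' : Pr P A) : le b b' -> le (@comp_imp _ _ K Pi A a b) (@comp_imp _ _ K Pi A a b').
Proof. intro H. unfold comp_imp. apply (proj1 (Hadj A a)). apply rx_mono; exact H. Qed.

Lemma imp_a (C : CartCat) (P : Doctrine C) (K : Comprehension P) (Pi : PiOp P)
  (Hadj : forall A (a : Pr P A), is_right_adj (cmp K a) (Pi _ _ (cmp K a)))
  A (f s : Pr P A) : le f (@comp_imp _ _ K Pi A s f).
Proof. apply (proj2 (proj2 (Hadj A s))). Qed.

Lemma imp_d (C : CartCat) (P : Doctrine C) (K : Comprehension P) (Pi : PiOp P)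
  (Hadj : forall A (a : Pr P A), is_right_adj (cmp K a) (Pi _ _ (cmp K a)))
  A (g f s : Pr P A) : le f s -> le g (@comp_imp _ _ K Pi A f s).
Proof.
  intro H. apply (proj2 (adj_iff (Hadj A f) _ _)).
  assert (E : rx (cmp K f) s = top K _).
  { apply top_eq. rewrite <- (cmp_top K f). apply rx_mono; exact H. }
  rewrite E. apply top_max.
Qed.

Lemma imp_M (C : CartCat) (P : Doctrine C) (K : Comprehension P) (Pi : PiOp P)
  (Hadj : forall A (a : Pr P A), is_right_adj (cmp K a) (Pi _ _ (cmp K a)))
  (HBC : BC_restricted Pi (@isCP C P K)) (Hfull : full_comprehension K)
  A (g f s : Pr P A) : le (top K A) (@comp_imp _ _ K Pi A g f) ->
  le (@comp_imp _ _ K Pi A g (@comp_imp _ _ K Pi A f s)) (@comp_imp _ _ K Pi A g s).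
Proof.
  intro H. apply (proj2 (adj_iff (Hadj A g) _ _)).
  apply (rx_mono (cmp K g)) in H. rewrite top_stable in H.
  rewrite !(imp_ii HBC), cmp_top. rewrite (imp_ii HBC), cmp_top in H.
  set (f' := rx (cmp K g) f) in *. set (s' := rx (cmp K g) s) in *.
  set (z := @comp_imp _ _ K Pi _ (top K _) (@comp_imp _ _ K Pi _ f' s')).
  assert (Hc := imp_c Hadj Hfull).
  assert (Hf : le (top K _) f') by (apply (Hc _ _ _ _ H); apply le_refl).
  assert (Hz : le z (@comp_imp _ _ K Pi _ f' s')).
  { apply (Hc _ _ _ _ (le_refl _)). apply top_max. }
  apply (Hc _ _ _ _ Hz). eapply le_trans; [apply top_max| exact Hf].
Qed.
Theorem mainTheorem3 :
  (forall (C : CartCat) (P : Doctrine C) (K : Comprehension P) (Pi : PiOp P),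
     (forall A (a : Pr P A), is_right_adj (cmp K a) (Pi _ _ (cmp K a))) ->
     imp_cond_c (comp_imp K Pi) ->
     full_comprehension K)
  /\
  (forall (C : CartCat) (P : Doctrine C) (K : Comprehension P) (Pi : PiOp P),
     Pi_doctrine Pi ->
     restricted_Pi_CP_doctrine K Pi ->
     (implicational Pi (comp_imp K Pi) <-> full_comprehension K)).
Proof.
  split.
  - intros C P K Pi Hadj Hc A a b g Hg.
    apply (Hc A a a b); [| apply le_refl].
    assert (E : rx (cmp K a) b = top K _).
    { rewrite Hg, rx_comp, cmp_top, top_stable. reflexivity. }
    apply (proj2 (adj_iff (Hadj A a) _ _)). rewrite E. apply top_max.
  - intros C P K Pi [HPadj HPBC] [HCadj HBC].
    assert (Hadj : forall A (a : Pr P A), is_right_adj (cmp K a) (Pi _ _ (cmp K a)))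
      by (intros; apply HCadj; apply isCP_cmp).
    split.
    + intros Himp. destruct Himp as [_ [_ [_ [_ [Hc _]]]]].
      intros A a b g Hg.
      apply (Hc A a a b); [| apply le_refl].
      assert (E : rx (cmp K a) b = top K _).
      { rewrite Hg, rx_comp, cmp_top, top_stable. reflexivity. }
      apply (proj2 (adj_iff (Hadj A a) _ _)). rewrite E. apply top_max.
    + intros Hfull.
      assert (Hc := imp_c Hadj Hfull).
      split; [intros; apply (imp_ii HBC)|].
      split.
      { intros X A a b. apply le_antisym.
        - apply (proj2 (adj_iff (Hadj A a) _ _)).
          pose proof (pb_proj X (cmp K a)) as Hpb.
          rewrite (HPBC _ _ _ _ _ _ _ _ (isProj_p2 X A) Hpb).
          rewrite (HPBC _ _ _ _ _ _ _ _ (isProj_p2 X A) Hpb).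
          apply (proj1 (HPadj _ _ _ (isProj_p2 X (cObj K a)))).
          rewrite (imp_ii HBC). rewrite <- rx_comp, p2_pair, rx_comp, cmp_top, top_stable.
          apply (Hc _ _ _ _ (le_refl _)). apply top_max.
        - apply (proj2 (adj_iff (HPadj _ _ _ (isProj_p2 X A)) _ _)).
          rewrite (imp_ii HBC). apply (imp_mono2 Hadj).
          apply (proj1 (proj2 (HPadj _ _ _ (isProj_p2 X A)))). }
      split; [intros; apply (imp_a Hadj)|].
      split.
      { intros A g f s.
        apply (proj2 (adj_iff (Hadj A _) _ _)).
        assert (Ht : le (top K _) (rx (cmp K (@comp_imp _ _ K Pi A g f)) (@comp_imp _ _ K Pi A g f)))
          by (rewrite cmp_top; apply le_refl).
        rewrite (imp_ii HBC) in Ht.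
        rewrite !(imp_ii HBC).
        apply (imp_M Hadj HBC Hfull). exact Ht. }
      split; [exact Hc|].
      intros; apply (imp_d Hadj); assumption.
Qed.
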